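(* Let $Y$ be a continuous random variable supported on $[0,\infty)$ whose density $f$ satisfies $f(t)\le Ce^{-\lambda t}$ for all $t\ge0$, for some $C,\lambda>0$. There exist constants $S,\delta>0$, depending only on $C,\lambda$, such that $|\mathbb{E}[e^{-sY}]-1| \ge \delta|s|$ for all complex $s$ with $|s|\le S$. *)

(* Defs.v *)
From HB Require Import structures.
From mathcomp Require Import all_boot all_order all_algebra.
From mathcomp Require Import all_classical all_reals all_analysis.
From mathcomp Require Import complex.
Set Implicit Arguments. Unset Strict Implicit. Unset Printing Implicit Defensive.
Import Order.TTheory GRing.Theory Num.Theory.
Local Open Scope ring_scope.
Local Open Scope classical_set_scope.

Definition is_density_on_nonneg (R : realType) (f : R -> R) : Prop :=
  [/\ measurable_fun setT f,
      (forall t, 0 <= f t),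
      (forall t, t < 0 -> f t = 0),
      lebesgue_measure.-integrable setT (EFin \o f) &
      ((\int[lebesgue_measure]_(t in setT) (f t)%:E)%E = 1%E)].

(* E[e^{-sY}] = \int_R e^{-s t} f(t) dt for complex s = a + i b:
   e^{-s t} = e^{-a t} (cos (b t) - i sin (b t)). *)
Definition laplace (R : realType) (f : R -> R) (s : R[i]) : R[i] :=
  let a := complex.Re s in let b := complex.Im s in
  complex.Complex
  (Rintegral lebesgue_measure setT (fun t => expR (- (a * t)) * cos (b * t) * f t))
  (- Rintegral lebesgue_measure setT (fun t => expR (- (a * t)) * sin (b * t) * f t)).

(* Main.v *)
Require Import Defs.
From HB Require Import structures.
From mathcomp Require Import all_boot all_order all_algebra.
From mathcomp Require Import all_classical all_reals all_analysis.
From mathcomp Require Import complex.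
From mathcomp Require Import ring lra measurable_realfun exponential_distribution.
Import Order.TTheory GRing.Theory Num.Theory numFieldTopology.Exports numFieldNormedType.Exports.
Set Implicit Arguments. Unset Strict Implicit. Unset Printing Implicit Defensive.

Section helpers.
Local Open Scope ring_scope.
Local Open Scope classical_set_scope.
Local Notation mu := lebesgue_measure.
Lemma eqW (R : numDomainType) (x y : R) : x = y -> x <= y.
Proof. by move->. Qed.

Lemma expR_facts (R : realType) (y : R) :
  [/\ 1 + y <= expR y, 0 < expR y, 1 - y <= (expR y)^-1 & (expR y)^-1 * expR y = 1].
Proof.
split; [exact: expR_ge1Dx|exact: expR_gt0| |by rewrite mulVf ?gt_eqF ?expR_gt0].
by rewrite -expRN; have := expR_ge1Dx (- y); lra.
Qed.

Lemma expR_le1' (R : realType) (y : R) : `|expR y - 1| <= `|y| * expR `|y|.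
Proof.
have [h1 ep h2 hv] := expR_facts y.
have [y0|y0] := leP 0 y.
- rewrite ger0_norm ?subr_ge0; last lra.
  rewrite (ger0_norm y0). nra.
- rewrite ler0_norm ?subr_le0; last by rewrite expR_le1 ltW.
  rewrite (ltr0_norm y0).
  have : 1 <= expR (- y) by rewrite -expR0 ler_expR; lra.
  have := expR_ge0 (-y). nra.
Qed.

Lemma expR_le2 (R : realType) (y : R) : `|expR y - 1 - y| <= y ^+ 2 * expR `|y|.
Proof.
have [h1 ep h2 hv] := expR_facts y.
rewrite ger0_norm; last lra.
have [y0|y0] := leP 0 y.
- rewrite (ger0_norm y0).
  have k1 : (1 - y) * expR y <= 1 by nra.
  have k2 : expR y - 1 <= y * expR y by nra.
  nra.
- rewrite (ltr0_norm y0).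
  have : 1 <= expR (- y) by rewrite -expR0 ler_expR; lra.
  have : expR y <= 1 by rewrite expR_le1 ltW.
  have := expR_ge0 (-y). nra.
Qed.

Lemma sin_le_pos (R : realType) (y : R) : 0 <= y -> `|sin y| <= y.
Proof.
move=> y0.
have hc : {within `[0, y], continuous (@sin R)}.
  by apply: continuous_subspaceT => x; exact: continuous_sin.
have [c _ h] := @MVT_segment R sin cos 0 y y0 (fun x _ => is_derive_sin x) hc.
move: h; rewrite sin0 subr0 subr0 => ->.
rewrite normrM (ger0_norm y0) ler_piMl //; exact: cos_max.
Qed.

Lemma sin_le (R : realType) (y : R) : `|sin y| <= `|y|.
Proof.
have [y0|y0] := leP 0 y; first by rewrite (ger0_norm y0) sin_le_pos.
by rewrite -normrN -sinN (ltr0_norm y0) sin_le_pos // oppr_ge0 ltW.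
Qed.

Lemma cos_le (R : realType) (y : R) : `|1 - cos y| <= y ^+ 2 / 2.
Proof.
have e : cos y = cos ((y / 2) *+ 2) by rewrite -mulr_natr divfK.
have := cos_mulr2n (y / 2); rewrite -e cos2sin2 => ->.
have := sin_le (y / 2).
rewrite -(ler_pXn2r (n := 2)) ?nnegrE ?normr_ge0 //= !real_normK ?num_real //.
move=> hs.
rewrite ger0_norm; last by have := sqr_ge0 (sin (y/2)); lra.
have -> : y ^+ 2 / 2 = (y / 2) ^+ 2 *+ 2 by rewrite mulr2n; field.
lra.
Qed.

Lemma sinx_pos (R : realType) (y : R) : 0 <= y -> `|sin y - y| <= y ^+ 2.
Proof.
move=> y0.
have hc : {within `[0, y], continuous (fun x : R => sin x - x)}.
  apply: continuous_subspaceT => x.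
  apply: continuousB; [exact: continuous_sin | exact: cvg_id].
have hd : forall x, x \in `]0, y[%R -> is_derive x 1 (fun x : R => sin x - x) (cos x - 1).
  move=> x _; apply: is_deriveB.
have [c] := @MVT_segment R _ _ 0 y y0 hd hc.
rewrite in_itv /= => /andP[c0 cy].
rewrite sin0 !subr0 => ->.
have h1 := cos_le c.
have h2 := cos_max c.
rewrite normrM (ger0_norm y0) -normrN opprB.
have [y2|y2] := leP y 2.
- apply: (le_trans (ler_wpM2r y0 h1)).
  have : c ^+ 2 <= y ^+ 2 by rewrite ler_pXn2r // nnegrE.
  nra.
- have : `|1 - cos c| <= 2.
    apply: (le_trans (ler_normB _ _)); rewrite normr1; lra.
  nra.
Qed.

Lemma sinx (R : realType) (y : R) : `|sin y - y| <= y ^+ 2.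
Proof.
have [y0|y0] := leP 0 y; first exact: sinx_pos.
have := @sinx_pos R (- y); rewrite oppr_ge0 ltW // sinN sqrrN.
have -> : - sin y - - y = - (sin y - y) by ring.
by rewrite normrN; apply.
Qed.

Lemma bound_re (R : realType) (a b t : R) : 0 <= t ->
  `|expR (- (a * t)) * cos (b * t) - 1 + a * t|
    <= (a ^+ 2 + b ^+ 2) * t ^+ 2 * expR (`|a| * t).
Proof.
move=> t0.
set u := - (a * t); set v := b * t.
have eX : expR `|u| = expR (`|a| * t) by rewrite /u normrN normrM (ger0_norm t0).
rewrite -eX.
set X := expR `|u|.
have h1 : `|expR u - 1 - u| <= u ^+ 2 * X := expR_le2 u.
have h2 : `|cos v| <= 1 := cos_max v.
have h3 : `|1 - cos v| <= v ^+ 2 / 2 := cos_le v.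
have h4 : `|1 + u| <= X.
  apply: (le_trans (ler_normD _ _)); rewrite normr1.
  exact: expR_ge1Dx.
have X1 : 1 <= X by rewrite /X -expR0 ler_expR.
have -> : expR u * cos v - 1 + a * t
   = (expR u - 1 - u) * cos v + (- (1 - cos v)) * (1 + u) by rewrite /u; ring.
apply: (le_trans (ler_normD _ _)); rewrite !normrM normrN.
have k1 : `|expR u - 1 - u| * `|cos v| <= u ^+ 2 * X.
  by rewrite -[X in _ <= X]mulr1; apply: ler_pM.
have k2 : `|1 - cos v| * `|1 + u| <= v ^+ 2 / 2 * X by apply: ler_pM.
have eu : u ^+ 2 = a ^+ 2 * t ^+ 2 by rewrite /u sqrrN exprMn.
have ev : v ^+ 2 = b ^+ 2 * t ^+ 2 by rewrite /v exprMn.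
have : 0 <= v ^+ 2 * X by rewrite mulr_ge0 ?sqr_ge0 // (le_trans _ X1).
rewrite eu ev in k1 k2 *. nra.
Qed.

Lemma bound_im (R : realType) (a b t : R) : 0 <= t ->
  `|expR (- (a * t)) * sin (b * t) - b * t|
    <= 2 * (a ^+ 2 + b ^+ 2) * t ^+ 2 * expR (`|a| * t).
Proof.
move=> t0.
set u := - (a * t); set v := b * t.
have eX : expR `|u| = expR (`|a| * t) by rewrite /u normrN normrM (ger0_norm t0).
rewrite -eX.
set X := expR `|u|.
have h1 : `|expR u - 1| <= `|u| * X := expR_le1' u.
have h2 : `|sin v| <= `|v| := sin_le v.
have h3 : `|sin v - v| <= v ^+ 2 := sinx v.
have X1 : 1 <= X by rewrite /X -expR0 ler_expR.
have -> : expR u * sin v - v = (expR u - 1) * sin v + (sin v - v) by ring.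
apply: (le_trans (ler_normD _ _)); rewrite !normrM.
have k1 : `|expR u - 1| * `|sin v| <= `|u| * X * `|v| by apply: ler_pM.
have k2 : v ^+ 2 <= v ^+ 2 * X by rewrite ler_peMr ?sqr_ge0.
have k3 : `|u| * `|v| * 2 <= u ^+ 2 + v ^+ 2.
  rewrite -(real_normK (num_real u)) -(real_normK (num_real v)).
  have := sqr_ge0 (`|u| - `|v|). nra.
have eu : u ^+ 2 = a ^+ 2 * t ^+ 2 by rewrite /u sqrrN exprMn.
have ev : v ^+ 2 = b ^+ 2 * t ^+ 2 by rewrite /v exprMn.
have X0 : 0 <= X by lra.
have : 0 <= u ^+ 2 * X by rewrite mulr_ge0 ?sqr_ge0.
have : 0 <= v ^+ 2 * X by rewrite mulr_ge0 ?sqr_ge0.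
rewrite eu ev in k1 k2 k3 *. nra.
Qed.


Lemma pdf_props (R : realType) (r : R) : 0 < r ->
  [/\ measurable_fun setT (exponential_pdf r), (forall t, 0 <= exponential_pdf r t),
      mu.-integrable setT (EFin \o exponential_pdf r) &
      Rintegral mu setT (exponential_pdf r) = 1].
Proof.
move=> r0.
have m := measurable_exponential_pdf r.
have p0 : forall t, 0 <= exponential_pdf r t.
  by move=> t; apply: exponential_pdf_ge0; exact: ltW.
have I1 := integral_exponential_pdf r0.
split => //.
- apply/integrableP; split; first exact/measurable_EFinP.
  under eq_integral => x _ do rewrite /comp abse_EFin ger0_norm //.
  by rewrite I1 ltry.
- by rewrite /Rintegral I1.
Qed.

Lemma dom_int (R : realType) (h g : R -> R) (K : R) :
  measurable_fun setT h -> mu.-integrable setT (EFin \o g) ->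
  (forall t, `|h t| <= K * g t) -> mu.-integrable setT (EFin \o h).
Proof.
move=> mh ig hb.
have iK : mu.-integrable setT (fun x => (K%:E * (g x)%:E)%E).
  exact: (integrableZl measurableT K ig).
apply: (le_integrable measurableT _ _ iK).
- exact/measurable_EFinP.
- move=> x _ /=; rewrite lee_fin.
  exact: le_trans (hb x) (ler_norm _).
Qed.

Lemma Rint_le (R : realType) (h g : R -> R) (K : R) :
  measurable_fun setT h -> mu.-integrable setT (EFin \o g) ->
  (forall t, `|h t| <= K * g t) ->
  `|Rintegral mu setT h| <= K * Rintegral mu setT g.
Proof.
move=> mh ig hb.
have ih := dom_int mh ig hb.
apply: (le_trans (le_normr_Rintegral _ ih)) => //.
rewrite -RintegralZl //.
apply: le_Rintegral => //.
- apply: (dom_int (g := g) (K := K)) => //.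
  + exact: measurableT_comp.
  + by move=> t; rewrite normr_id.
- apply: (dom_int (g := g) (K := K)) => //.
  + have /integrableP[/measurable_EFinP mg _] := ig.
    exact: measurable_funM (measurable_cst K) mg.
  + move=> t; rewrite ger0_norm //; exact: le_trans (normr_ge0 _) (hb t).
Qed.

Lemma poly_exp (R : realType) (lam t : R) : 0 < lam -> 0 <= t ->
  1 + t ^+ 2 <= (1 + 64 / lam ^+ 2) * expR (lam / 4 * t).
Proof.
move=> l0 t0.
have e : expR (lam / 4 * t) = expR (lam / 8 * t) ^+ 2.
  by rewrite -expRM_natl; congr expR; field.
have h8 := expR_ge1Dx (lam / 8 * t).
have p : 0 <= lam / 8 * t by rewrite mulr_ge0 // divr_ge0 // ltW.
have h : (lam / 8 * t) ^+ 2 <= expR (lam / 8 * t) ^+ 2.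
  by rewrite ler_pXn2r // ?nnegrE ?expR_ge0 //; lra.
have E1 : 1 <= expR (lam / 4 * t) by rewrite -expR0 ler_expR mulr_ge0 // divr_ge0 // ltW.
rewrite -e in h.
have : t ^+ 2 <= 64 / lam ^+ 2 * expR (lam / 4 * t).
  rewrite -(@ler_pM2l _ (lam ^+ 2 / 64)); last by rewrite divr_gt0 // exprn_gt0.
  have -> : lam ^+ 2 / 64 * (64 / lam ^+ 2 * expR (lam / 4 * t)) = expR (lam / 4 * t).
    by field; rewrite gt_eqF.
  apply: (le_trans _ h); rewrite exprMn; by apply/eqW; field.
lra.
Qed.

Lemma major (R : realType) (C lam : R) (f w : R -> R) (B : R) : 0 < lam ->
  (forall t, t < 0 -> f t = 0) -> (forall t, 0 <= f t) ->
  (forall t, 0 <= t -> f t <= C * expR (- (lam * t))) ->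
  (forall t, 0 <= t -> `|w t| <= B * ((1 + t ^+ 2) * expR (lam / 2 * t))) ->
  forall t, `|w t * f t| <= (B * (C * (1 + 64 / lam ^+ 2) * (4 / lam)))
                              * exponential_pdf (lam / 4) t.
Proof.
move=> l0 f0 fp fb hw t.
have [tn|t0] := ltP t 0.
  by rewrite f0 // mulr0 normr0 lt0_exponential_pdf // mulr0.
have B0 : 0 <= B.
  have := hw 0 (lexx _); rewrite expr0n /= addr0 mulr0 expR0 !mulr1.
  exact: le_trans (normr_ge0 _).
have C0 : 0 <= C.
  have := fb 0 (lexx _); rewrite mulr0 oppr0 expR0 mulr1.
  exact: le_trans (fp 0).
rewrite exponential_pdfE // normrM (ger0_norm (fp t)).
have k1 := hw t t0.
have k2 := fb t t0.
have k3 := poly_exp l0 t0.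
have ee : expR (lam / 2 * t) * expR (- (lam * t)) * expR (lam / 4 * t)
          = expR (- (lam / 4) * t).
  by rewrite -!expRD; congr expR; field.
apply: (le_trans (ler_pM (normr_ge0 _) (fp t) k1 k2)).
set E2 := expR (lam / 2 * t); set En := expR (- (lam * t)); set E4 := expR (lam / 4 * t).
have E20 : 0 <= E2 by exact: expR_ge0.
have En0 : 0 <= En by exact: expR_ge0.
have : B * ((1 + t ^+ 2) * E2) * (C * En) <= B * ((1 + 64 / lam ^+ 2) * E4 * E2) * (C * En).
  rewrite ler_wpM2r ?mulr_ge0 // ler_wpM2l // ler_wpM2r //.
move=> H; apply: (le_trans H); apply/eqW.
have -> : B * ((1 + 64 / lam ^+ 2) * E4 * E2) * (C * En)
   = B * C * (1 + 64 / lam ^+ 2) * (E2 * En * E4) by ring.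
rewrite ee; field.
by rewrite gt_eqF.
Qed.

Lemma mean_lb (R : realType) (C : R) (f : R -> R) : 0 < C ->
  (forall t, t < 0 -> f t = 0) -> (forall t, 0 <= f t) ->
  (forall t, 0 <= t -> f t <= C) ->
  mu.-integrable setT (EFin \o f) ->
  mu.-integrable setT (EFin \o (fun t : R => t * f t)) ->
  Rintegral mu setT f = 1 ->
  1 / (4 * expR 1 * C) <= Rintegral mu setT (fun t : R => t * f t).
Proof.
move=> C0 f0 fp fC If Itf I1.
set e := expR 1.
have e0 : 0 < e by exact: expR_gt0.
set t0 := 1 / (2 * e * C).
have t00 : 0 < t0 by rewrite /t0 divr_gt0 // !mulr_gt0.
set r := 2 * e * C.
have r0 : 0 < r by rewrite !mulr_gt0.
have rt0 : r * t0 = 1 by rewrite /t0 /r; field; rewrite !gt_eqF.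
set K2 := t0 ^+ 2 * C * e.
have [mp pp Ip Rp] := pdf_props r0.
have pw : forall t, t0 * f t - K2 * exponential_pdf r t <= t * f t.
  move=> t.
  have [tn|tp] := ltP t 0.
    by rewrite f0 // lt0_exponential_pdf // !mulr0 subrr.
  have [tt|tt] := leP t0 t.
    have hK : 0 <= K2 * exponential_pdf r t.
      apply: mulr_ge0 => //; rewrite /K2; apply: mulr_ge0; last exact: ltW.
      by apply: mulr_ge0; [exact: sqr_ge0| exact: ltW].
    apply: (le_trans _ (ler_wpM2r (fp t) tt)).
    by rewrite lerBlDr lerDl.
  rewrite exponential_pdfE //.
  have h1 : (t0 - t) * f t <= t0 * C.
    apply: ler_pM => //; [lra | lra | exact: fC].
  have h2 : 1 <= e * expR (- r * t).
    rewrite /e -expRD -expR0 ler_expR.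
    have : r * t <= r * t0 by rewrite ler_wpM2l // ltW.
    rewrite rt0 expR0; lra.
  have h3 : K2 * (r * expR (- r * t)) = t0 * C * (e * expR (- r * t)).
    rewrite /K2 -[RHS]mulr1 -rt0; ring.
  have : t0 * C <= t0 * C * (e * expR (- r * t)).
    by rewrite ler_peMr // mulr_ge0 // ltW.
  lra.
have iK : mu.-integrable setT (EFin \o (fun t => K2 * exponential_pdf r t)).
  apply: (dom_int (g := exponential_pdf r) (K := K2)) => //.
  - by apply: measurable_funM => //; exact: measurable_cst.
  - move=> t; rewrite ger0_norm //; apply: mulr_ge0 => //; rewrite /K2.
    apply: mulr_ge0; last exact: ltW.
    by apply: mulr_ge0; [exact: sqr_ge0| exact: ltW].
have it0 : mu.-integrable setT (EFin \o (fun t => t0 * f t)).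
  have /integrableP[/measurable_EFinP mf _] := If.
  apply: (dom_int (g := f) (K := t0)) => //.
  - by apply: measurable_funM => //; exact: measurable_cst.
  - by move=> t; rewrite ger0_norm // mulr_ge0 // ltW.
have := le_Rintegral measurableT (integrableB measurableT it0 iK) Itf (fun t _ => pw t).
rewrite RintegralB // RintegralZl // RintegralZl // I1 Rp !mulr1.
apply: le_trans; apply/eqW.
rewrite /K2 /t0; field; rewrite !gt_eqF //.
Qed.
Lemma sqrt_ge (R : rcfType) (u v : R) : 0 <= v -> v ^+ 2 <= u -> v <= Num.sqrt u.
Proof.
move=> v0 h; rewrite -(ger0_norm v0) -sqrtr_sqr; exact: ler_wsqrtr.
Qed.

Lemma sqrt_le (R : rcfType) (u v : R) : 0 <= v -> u <= v ^+ 2 -> Num.sqrt u <= v.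
Proof.
move=> v0 h; rewrite -(ger0_norm v0) -sqrtr_sqr; exact: ler_wsqrtr.
Qed.

Lemma final_real (R : rcfType) (a b x y m m0 E S : R) :
  0 < m0 -> m0 <= m -> 0 <= E -> Num.sqrt (a ^+ 2 + b ^+ 2) <= S ->
  4 * E * S <= m0 ->
  `|x + a * m| <= E * Num.sqrt (a ^+ 2 + b ^+ 2) ^+ 2 ->
  `|y + b * m| <= E * Num.sqrt (a ^+ 2 + b ^+ 2) ^+ 2 ->
  m0 / 4 * Num.sqrt (a ^+ 2 + b ^+ 2) <= Num.sqrt (x ^+ 2 + y ^+ 2).
Proof.
set n := Num.sqrt _ => m00 mm E0 nS ES hx hy.
have n0 : 0 <= n := sqrtr_ge0 _.
have na : n <= `|a| + `|b|.
  apply: sqrt_le; first by rewrite addr_ge0.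
  rewrite sqrrD -(real_normK (num_real a)) -(real_normK (num_real b)).
  have : 0 <= `|a| * `|b| *+ 2 by rewrite mulrn_wge0 // mulr_ge0.
  lra.
have xy : (`|x| + `|y|) / 2 <= Num.sqrt (x ^+ 2 + y ^+ 2).
  apply: sqrt_ge; first by rewrite divr_ge0 // addr_ge0.
  rewrite -(real_normK (num_real x)) -(real_normK (num_real y)).
  have := sqr_ge0 (`|x| - `|y|). nra.
have hx2 : `|a| * m <= `|x + a * m| + `|x|.
  have -> : `|a| * m = `|a * m| by rewrite normrM (ger0_norm (le_trans (ltW m00) mm)).
  have := ler_normB (x + a * m) x.
  by rewrite (_ : x + a * m - x = a * m) //; ring.
have hy2 : `|b| * m <= `|y + b * m| + `|y|.
  have -> : `|b| * m = `|b * m| by rewrite normrM (ger0_norm (le_trans (ltW m00) mm)).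
  have := ler_normB (y + b * m) y.
  by rewrite (_ : y + b * m - y = b * m) //; ring.
apply: le_trans xy.
have k1 : n * m0 <= (`|a| + `|b|) * m.
  apply: ler_pM => //; exact: ltW.
have k2 : E * n ^+ 2 <= E * S * n by rewrite -mulrA ler_wpM2l // expr2 ler_wpM2r.
have := normr_ge0 a. have := normr_ge0 b.
nra.
Qed.
Lemma mlin (R : realType) (a : R) : measurable_fun setT (fun t : R => a * t).
Proof. by apply: measurable_funM => //; exact: measurable_cst. Qed.

Lemma mexp (R : realType) (a : R) : measurable_fun setT (fun t : R => expR (- (a * t))).
Proof.
apply: measurableT_comp; first exact: measurable_expR.
apply: measurable_funN; exact: mlin.
Qed.

Lemma mcos (R : realType) (b : R) : measurable_fun setT (fun t : R => cos (b * t)).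
Proof.
apply: measurableT_comp; last exact: mlin.
by apply: continuous_measurable_fun => x; exact: continuous_cos.
Qed.

Lemma msin (R : realType) (b : R) : measurable_fun setT (fun t : R => sin (b * t)).
Proof.
apply: measurableT_comp; last exact: mlin.
by apply: continuous_measurable_fun => x; exact: continuous_sin.
Qed.

Lemma lap_sub (R : realType) (f : R -> R) (s : R[i]) :
  laplace f s - 1 = Complex
  (Rintegral mu setT (fun t => expR (- (complex.Re s * t)) * cos (complex.Im s * t) * f t) - 1)
  (- Rintegral mu setT (fun t => expR (- (complex.Re s * t)) * sin (complex.Im s * t) * f t)).
Proof. by rewrite /laplace /=; congr Complex; rewrite /= oppr0 addr0. Qed.

Lemma intB (R : realType) (u v : R -> R) :
  mu.-integrable setT (EFin \o u) -> mu.-integrable setT (EFin \o v) ->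
  mu.-integrable setT (EFin \o (fun t => u t - v t)).
Proof.
move=> Iu Iv; apply: (eq_integrable measurableT _ _ _ (integrableB measurableT Iu Iv)) => x _ /=.
by rewrite EFinB.
Qed.

Lemma intD (R : realType) (u v : R -> R) :
  mu.-integrable setT (EFin \o u) -> mu.-integrable setT (EFin \o v) ->
  mu.-integrable setT (EFin \o (fun t => u t + v t)).
Proof.
move=> Iu Iv; apply: (eq_integrable measurableT _ _ _ (integrableD measurableT Iu Iv)) => x _ /=.
by rewrite EFinD.
Qed.

Lemma intZ (R : realType) (k : R) (u : R -> R) :
  mu.-integrable setT (EFin \o u) ->
  mu.-integrable setT (EFin \o (fun t => k * u t)).
Proof.
move=> Iu; apply: (eq_integrable measurableT _ _ _ (integrableZl measurableT k Iu)) => x _ /=.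
by rewrite EFinM.
Qed.

End helpers.

Local Open Scope ring_scope.
Local Open Scope complex_scope.

Theorem lemma8 (R : realType) (C lambda : R) (hC : 0 < C) (hl : 0 < lambda) :
  exists S delta : R, 0 < S /\ 0 < delta /\
    forall f : R -> R, is_density_on_nonneg f ->
      (forall t : R, 0 <= t -> f t <= C * expR (- (lambda * t))) ->
      forall s : R[i], `|s| <= S%:C -> delta%:C * `|s| <= `|laplace f s - 1|.
Proof.
pose K := C * (1 + 64 / lambda ^+ 2) * (4 / lambda).
pose m0 := 1 / (4 * expR 1 * C).
have l2 : 0 < 64 / lambda ^+ 2 by rewrite divr_gt0 // exprn_gt0.
have K0 : 0 < K.
  rewrite /K; apply: mulr_gt0; last by rewrite divr_gt0.
  apply: mulr_gt0 => //; lra.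
have m00 : 0 < m0 by rewrite /m0 divr_gt0 // !mulr_gt0 // expR_gt0.
exists (Num.min (lambda / 2) (m0 / (8 * K))), (m0 / 4).
split; first by rewrite lt_min !divr_gt0 // mulr_gt0.
split; first by rewrite divr_gt0.
move=> f [mf fp f0 If I1E] fb s.
set S := Num.min _ _.
move=> hs.
have SL : S <= lambda / 2 by rewrite /S ge_min lexx.
have SK : S <= m0 / (8 * K) by rewrite /S ge_min lexx orbT.
have I1 : Rintegral lebesgue_measure setT f = 1 by rewrite /Rintegral I1E.
have fC : forall t, 0 <= t -> f t <= C.
  move=> t t0; apply: le_trans (fb t t0) _.
  apply: ler_piMr; first exact: ltW.
  by rewrite expR_le1 oppr_le0 mulr_ge0 // ltW.
have l4 : 0 < lambda / 4 by rewrite divr_gt0.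
have [mp pp Ip Rp] := pdf_props l4.
have Maj := fun w B hw => @major R C lambda f w B hl f0 fp fb hw.
have E2ge : forall t, 0 <= t -> 1 <= expR (lambda / 2 * t).
  by move=> t t0; rewrite -expR0 ler_expR mulr_ge0 // divr_ge0 // ltW.
have mtf : measurable_fun setT (fun t : R => t * f t) by apply: measurable_funM.
have Itf : lebesgue_measure.-integrable setT (EFin \o (fun t : R => t * f t)).
  apply: (dom_int (g := exponential_pdf (lambda / 4)) (K := 1 * K)) => //.
  apply: (Maj (fun t : R => t)) => t t0.
  rewrite mul1r ger0_norm //.
  have h1 : t <= 1 + t ^+ 2 by have := sqr_ge0 (t - 1); nra.
  have h2 := E2ge t t0.
  have h3 : 0 <= (1 + t ^+ 2) * (expR (lambda / 2 * t) - 1).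
    by apply: mulr_ge0; [have := sqr_ge0 t; lra | lra].
  nra.
have mlb := mean_lb hC f0 fp fC If Itf I1.
rewrite normc_def lecR in hs.
rewrite lap_sub !normc_def -rmorphM lecR /=.
move: hs.
set a := complex.Re s; set b := complex.Im s => hs.
set m := Rintegral lebesgue_measure setT (fun t : R => t * f t).
set n := Num.sqrt (a ^+ 2 + b ^+ 2).
have n2 : n ^+ 2 = a ^+ 2 + b ^+ 2 by rewrite sqr_sqrtr // addr_ge0 // sqr_ge0.
have na : `|a| <= n.
  rewrite -sqrtr_sqr; apply: ler_wsqrtr; have := sqr_ge0 b; lra.
have aL : `|a| <= lambda / 2 by apply: le_trans na (le_trans hs SL).
have ea : forall t, 0 <= t -> expR (`|a| * t) <= expR (lambda / 2 * t).
  by move=> t t0; rewrite ler_expR ler_wpM2r.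
have ea' : forall t, 0 <= t -> expR (- (a * t)) <= expR (lambda / 2 * t).
  move=> t t0; apply: le_trans (ea t t0); rewrite ler_expR -mulNr ler_wpM2r //.
  by rewrite -normrN ler_norm.
have tE : forall t, 0 <= t -> t ^+ 2 * expR (lambda / 2 * t) <= (1 + t ^+ 2) * expR (lambda / 2 * t).
  by move=> t t0; rewrite ler_wpM2r ?expR_ge0 // lerDr.
have E1 : forall t, 0 <= t -> expR (lambda / 2 * t) <= (1 + t ^+ 2) * expR (lambda / 2 * t).
  by move=> t t0; rewrite ler_peMl ?expR_ge0 // lerDl sqr_ge0.
have mg1 : measurable_fun setT (fun t : R => expR (- (a * t)) * cos (b * t) * f t).
  by apply: measurable_funM => //; apply: measurable_funM; [exact: mexp | exact: mcos].
have mg2 : measurable_fun setT (fun t : R => expR (- (a * t)) * sin (b * t) * f t).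
  by apply: measurable_funM => //; apply: measurable_funM; [exact: mexp | exact: msin].
have Ig1 : lebesgue_measure.-integrable setT
    (EFin \o (fun t : R => expR (- (a * t)) * cos (b * t) * f t)).
  apply: (dom_int (g := exponential_pdf (lambda / 4)) (K := 1 * K)) => //.
  apply: (Maj (fun t : R => expR (- (a * t)) * cos (b * t))) => t t0.
  rewrite mul1r normrM (ger0_norm (expR_ge0 _)).
  apply: le_trans (E1 t t0); apply: le_trans (ea' t t0).
  by rewrite ler_piMr ?expR_ge0 // cos_max.
have Ig2 : lebesgue_measure.-integrable setT
    (EFin \o (fun t : R => expR (- (a * t)) * sin (b * t) * f t)).
  apply: (dom_int (g := exponential_pdf (lambda / 4)) (K := 1 * K)) => //.
  apply: (Maj (fun t : R => expR (- (a * t)) * sin (b * t))) => t t0.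
  rewrite mul1r normrM (ger0_norm (expR_ge0 _)).
  apply: le_trans (E1 t t0); apply: le_trans (ea' t t0).
  by rewrite ler_piMr ?expR_ge0 // sin_max.
apply: (final_real (m := m) (E := 2 * K) (S := S)) => //.
- by rewrite mulr_ge0 // ltW.
- have h : 8 * K * S <= 8 * K * (m0 / (8 * K)) by rewrite ler_wpM2l // mulr_ge0 // ltW.
  have e : 8 * K * (m0 / (8 * K)) = m0 by field; rewrite gt_eqF.
  rewrite e in h; lra.
- rewrite n2.
  have -> : Rintegral lebesgue_measure setT (fun t => expR (- (a * t)) * cos (b * t) * f t) - 1 + a * m
     = Rintegral lebesgue_measure setT (fun t => expR (- (a * t)) * cos (b * t) * f t - f t + a * (t * f t)).
    rewrite RintegralD //; last exact: intZ.
      by rewrite RintegralB // RintegralZl // I1.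
    exact: intB.
  have mh : measurable_fun setT (fun t : R => expR (- (a * t)) * cos (b * t) * f t - f t + a * (t * f t)).
    apply: measurable_funD; first exact: measurable_funB.
    by apply: measurable_funM => //; exact: measurable_cst.
  apply: le_trans (Rint_le (K := 2 * (a ^+ 2 + b ^+ 2) * K) mh Ip _) _.
    move=> t.
    have -> : expR (- (a * t)) * cos (b * t) * f t - f t + a * (t * f t)
      = (expR (- (a * t)) * cos (b * t) - 1 + a * t) * f t by ring.
    apply: (Maj (fun t : R => expR (- (a * t)) * cos (b * t) - 1 + a * t)) => {}t t0.
    apply: le_trans (bound_re a b t0) _.
    have ab0 : 0 <= a ^+ 2 + b ^+ 2 by rewrite addr_ge0 // sqr_ge0.
    have k1 : t ^+ 2 * expR (`|a| * t) <= (1 + t ^+ 2) * expR (lambda / 2 * t).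
      apply: le_trans (tE t t0); rewrite ler_wpM2l ?sqr_ge0 //; exact: ea.
    have k2 : 0 <= (1 + t ^+ 2) * expR (lambda / 2 * t).
      by rewrite mulr_ge0 ?expR_ge0 // addr_ge0 // sqr_ge0.
    rewrite -mulrA; apply: le_trans (ler_wpM2l ab0 k1) _.
    rewrite -[X in _ <= X]mulrA; have := mulr_ge0 ab0 k2; lra.
  by rewrite Rp mulr1 mulrAC.
- rewrite n2.
  have -> : - Rintegral lebesgue_measure setT (fun t => expR (- (a * t)) * sin (b * t) * f t) + b * m
     = - Rintegral lebesgue_measure setT (fun t => expR (- (a * t)) * sin (b * t) * f t - b * (t * f t)).
    by rewrite RintegralB // ?RintegralZl //; [rewrite /m; ring | exact: intZ].
  rewrite normrN.
  have mh : measurable_fun setT (fun t : R => expR (- (a * t)) * sin (b * t) * f t - b * (t * f t)).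
    apply: measurable_funB => //.
    by apply: measurable_funM => //; exact: measurable_cst.
  apply: le_trans (Rint_le (K := 2 * (a ^+ 2 + b ^+ 2) * K) mh Ip _) _.
    move=> t.
    have -> : expR (- (a * t)) * sin (b * t) * f t - b * (t * f t)
      = (expR (- (a * t)) * sin (b * t) - b * t) * f t by ring.
    apply: (Maj (fun t : R => expR (- (a * t)) * sin (b * t) - b * t)) => {}t t0.
    apply: le_trans (bound_im a b t0) _.
    have ab0 : 0 <= 2 * (a ^+ 2 + b ^+ 2) by rewrite mulr_ge0 // addr_ge0 // sqr_ge0.
    have k1 : t ^+ 2 * expR (`|a| * t) <= (1 + t ^+ 2) * expR (lambda / 2 * t).
      apply: le_trans (tE t t0); rewrite ler_wpM2l ?sqr_ge0 //; exact: ea.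
    by rewrite -mulrA ler_wpM2l.
  by rewrite Rp mulr1 mulrAC.
Qed.
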